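(* Let $R$ be a commutative ring with identity. (1) If $R$ is semi-complemented, then $R$ is $\pi$-complemented. (2) If $R$ is $\pi$-complemented, then $R$ is almost complemented.
   Context: $\mathfrak{N}(R)$ is the nilradical and $\mathrm{reg}(R)$ the set of regular elements. An element $a$ is complemented if there is $b$ with $ab=0$ and $a+b\in\mathrm{reg}(R)$. $R$ is semi-complemented if every element of $R\setminus\mathfrak{N}(R)$ is complemented; $R$ is $\pi$-complemented if every element has some power $a^n$ ($n\ge1$) that is complemented; $R$ is almost complemented if $R/\mathfrak{N}(R)$ is a complemented ring (every element of it complemented in it). *)

(* Defs.v *)
From mathcomp Require Import all_boot all_algebra.
Set Implicit Arguments. Unset Strict Implicit. Unset Printing Implicit Defensive.
Import GRing.Theory.
Local Open Scope ring_scope.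

Definition nilrad (R : comPzRingType) (x : R) : Prop := exists n : nat, x ^+ n = 0.

Definition regular (R : comPzRingType) (x : R) : Prop := forall c : R, x * c = 0 -> c = 0.

Definition complemented (R : comPzRingType) (a : R) : Prop :=
  exists b : R, a * b = 0 /\ regular (a + b).

Definition semi_complemented (R : comPzRingType) : Prop :=
  forall a : R, ~ nilrad a -> complemented a.

Definition pi_complemented (R : comPzRingType) : Prop :=
  forall a : R, exists n : nat, (1 <= n)%N /\ complemented (a ^+ n).

(* Quotient R/N(R), described through representatives: the class of x is zero
   iff x \in N(R).  A class [a+b] is regular in R/N(R) iff for every class [c],
   [(a+b) c] = 0 implies [c] = 0; [a][b] = 0 iff a*b \in N(R). *)
Definition regular_mod_nil (R : comPzRingType) (x : R) : Prop :=
  forall c : R, nilrad (x * c) -> nilrad c.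

Definition complemented_mod_nil (R : comPzRingType) (a : R) : Prop :=
  exists b : R, nilrad (a * b) /\ regular_mod_nil (a + b).

Definition almost_complemented (R : comPzRingType) : Prop :=
  forall a : R, complemented_mod_nil a.

(* Main.v *)
Require Import Defs.
From mathcomp Require Import all_boot all_algebra.
From Stdlib Require Import Classical_Prop.
From mathcomp Require Import ring.
Import GRing.Theory.
Local Open Scope ring_scope.

Section H.
Variable R : comPzRingType.

Lemma nil_add (x y : R) : nilrad x -> nilrad y -> nilrad (x + y).
Proof.
move=> [p hp] [q hq]; exists (p + q)%N; rewrite exprDn big1 // => i _.
case: (leqP q i) => hi.
  by rewrite -(subnKC hi) exprD hq mul0r mulr0; apply: mul0rn.
have -> : (p + q - i = p + (q - i))%N by rewrite addnBA // ltnW.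
by rewrite exprD hp !mul0r; apply: mul0rn.
Qed.

Lemma nil_mulr (x y : R) : nilrad x -> nilrad (x * y).
Proof. by move=> [p hp]; exists p; rewrite exprMn hp mul0r. Qed.

Lemma nil_mull (x y : R) : nilrad y -> nilrad (x * y).
Proof. by rewrite mulrC; apply: nil_mulr. Qed.

Lemma nil_opp (x : R) : nilrad x -> nilrad (- x).
Proof. by move=> h; rewrite -mulN1r; apply: nil_mull. Qed.

Lemma nil_pow (x : R) k : nilrad (x ^+ k) -> nilrad x.
Proof. by move=> [p hp]; exists (k * p)%N; rewrite exprM. Qed.

Lemma reg_mul (x y : R) : regular x -> regular y -> regular (x * y).
Proof. by move=> hx hy c; rewrite -mulrA => /hx /hy. Qed.

Lemma reg_pow (x : R) k : regular x -> regular (x ^+ k).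
Proof.
move=> hx; elim: k => [|k IH]; first by move=> c; rewrite expr0 mul1r.
by rewrite exprS; apply: reg_mul.
Qed.
End H.

Theorem mainTheorem20 (R : comPzRingType) :
  (semi_complemented R -> pi_complemented R) /\
  (pi_complemented R -> almost_complemented R).
Proof.
split.
  move=> hs a.
  case: (Classical_Prop.classic (nilrad a)) => hn; last by exists 1%N; split => //; rewrite expr1; apply: hs.
  case: hn => p hp; exists p.+1; split => //.
  exists 1; rewrite exprSr hp !mul0r add0r; split => // c; by rewrite mul1r.
move=> hpi a.
case: (hpi a) => -[|m] [] // _ [b [hab hreg]].
exists b; split.
  apply: (@nil_pow _ _ m.+1); exists 1%N; by rewrite expr1 exprMn (exprS b) mulrA hab mul0r.
move=> c hc.
have hb : nilrad (b * c).
  have h1 : nilrad (b * b * c).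
    have -> : b * b * c = b * ((a + b) * c) - (a * b) * c.
      by ring.
    apply: nil_add; first exact: nil_mull.
    apply/nil_opp/nil_mulr/(@nil_pow _ _ m.+1); exists 1%N.
    by rewrite expr1 exprMn (exprS b) mulrA hab mul0r.
  apply: (@nil_pow _ _ 2); rewrite expr2 mulrA.
  by rewrite -(mulrA b c b) (mulrC c b) mulrA; apply: nil_mulr.
have ha : nilrad (a ^+ m.+1 * c).
  have -> : a ^+ m.+1 * c = a ^+ m * ((a + b) * c) - a ^+ m * (b * c).
    by rewrite exprSr; ring.
  by apply: nil_add; [apply: nil_mull | apply/nil_opp/nil_mull].
have [k hk] : nilrad ((a ^+ m.+1 + b) * c) by rewrite mulrDl; apply: nil_add.
exists k; apply: (@reg_pow _ _ k hreg); by rewrite -exprMn.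
Qed.
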